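(* Let $m,a,b,t\in\mathbb{N}$ with $m\geq 3$, $a\geq 1$, $t\in\{2,\ldots,m-1\}$ and $(t-1)(am+1)<bm+t<t(am+1)$, and let $S=\langle m,\ am+1,\ bm+t\rangle$ (a MANS-semigroup with embedding dimension $3$). Then $S$ is pseudo-symmetric if and only if $t=\frac{m+1}{2}$ and $t=\frac{b+1}{a}$.
   Context: $\mathbb{N}=\{0,1,2,\ldots\}$. $\langle A\rangle$ is the submonoid of $(\mathbb{N},+)$ generated by $A$; a numerical semigroup is a submonoid of $\mathbb{N}$ with finite complement. $\mathrm{F}(S)$ is the largest integer not in $S$. A numerical semigroup is irreducible if it cannot be expressed as the intersection of two numerical semigroups properly containing it; it is pseudo-symmetric if it is irreducible and $\mathrm{F}(S)$ is even. A MANS-semigroup is a numerical semigroup with $w(1)<\cdots<w(\mathrm{m}(S)-1)$, where $\mathrm{m}(S)$ is the least element of $S\setminus\{0\}$ and $w(i)$ the least element of $S$ congruent to $i$ modulo $\mathrm{m}(S)$. *)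

(* Defs.v *)
From mathcomp Require Import all_boot.
Set Implicit Arguments. Unset Strict Implicit. Unset Printing Implicit Defensive.

Inductive gen (A : seq nat) : nat -> Prop :=
  | gen0 : gen A 0
  | genS : forall x a, gen A x -> a \in A -> gen A (x + a).

Definition numerical_semigroup (S : nat -> Prop) : Prop :=
  S 0 /\ (forall x y, S x -> S y -> S (x + y)) /\
  exists N, forall n, N <= n -> S n.

Definition proper_subset (S T : nat -> Prop) : Prop :=
  (forall x, S x -> T x) /\ exists x, T x /\ ~ S x.

Definition irreducible (S : nat -> Prop) : Prop :=
  numerical_semigroup S /\
  ~ exists S1 S2 : nat -> Prop,
      [/\ numerical_semigroup S1, numerical_semigroup S2,
          proper_subset S S1, proper_subset S S2 &
          forall x, S x <-> (S1 x /\ S2 x)].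

(* f is the Frobenius number F(S) (largest integer not in S); when S = N,
   F(S) = -1 and no natural f satisfies this predicate. *)
Definition frobenius (S : nat -> Prop) (f : nat) : Prop :=
  ~ S f /\ forall n, f < n -> S n.

(* pseudo-symmetric: irreducible with even Frobenius number
   (F(N) = -1 is odd, so S = N is never pseudo-symmetric). *)
Definition pseudo_symmetric (S : nat -> Prop) : Prop :=
  irreducible S /\ exists f, frobenius S f /\ ~~ odd f.

(* Main.v *)
Require Import Defs.
From mathcomp Require Import all_boot.
From mathcomp Require Import zify.
From Stdlib Require Import Classical.
Set Implicit Arguments. Unset Strict Implicit. Unset Printing Implicit Defensive.

Lemma gen_add A x y : gen A x -> gen A y -> gen A (x + y).
Proof. move=> hx; elim=> [|z g _ ih hg]; first by rewrite addn0.
by rewrite addnA; apply: genS. Qed.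

Lemma gen_g A g : g \in A -> gen A g.
Proof. by move=> h; have := genS (gen0 A) h; rewrite add0n. Qed.

Lemma gen_mul A k g : g \in A -> gen A (k * g).
Proof. move=> h; elim: k => [|k ih]; first exact: gen0.
by rewrite mulSn addnC; apply: genS. Qed.

Lemma exmax (P : nat -> Prop) N : (exists x, P x) -> (forall x, P x -> x <= N) ->
  exists x, P x /\ forall y, P y -> y <= x.
Proof.
elim: N => [|N ih] [x0 Px0] hb.
  exists x0; split => // y Py; have := hb _ Py; have := hb _ Px0; lia.
case: (classic (P N.+1)) => [HN|HN].
  by exists N.+1; split.
apply: ih; first by exists x0.
move=> x Px; have := hb _ Px; rewrite leq_eqVlt => /orP [/eqP E|//].
by rewrite E in Px.
Qed.

Lemma not_irr (S : nat -> Prop) F h : numerical_semigroup S -> frobenius S F ->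
  ~ S h -> h <> F -> (forall s, S s -> 0 < s -> S (h + s)) -> S (h + h) ->
  ~ irreducible S.
Proof.
move=> [S0 [Sadd [N HN]]] [nF HF] nh hF hs h2 [_ Hirr]; apply: Hirr.
have F0 : 0 < F by case: (posnP F) => [E|//]; rewrite E in nF.
have ns : forall k, (forall s, S s -> 0 < s -> S (k + s)) -> S (k + k) ->
    numerical_semigroup (fun x => S x \/ x = k).
  move=> k ks k2; split; first by left.
  split; last by exists N => n /HN; left.
  move=> x y [Sx|Ex] [Sy|Ey].
  - by left; apply: Sadd.
  - subst y; case: (posnP x) => [E|xp]; first by right; rewrite E.
    by left; rewrite addnC; apply: ks.
  - subst x; case: (posnP y) => [E|yp]; first by right; rewrite E addn0.
    by left; apply: ks.
  - by subst; left.
exists (fun x => S x \/ x = h), (fun x => S x \/ x = F); split.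
- exact: ns.
- apply: ns; first by move=> s _ sp; apply: HF; lia.
  by apply: HF; lia.
- by split; [move=> x; left | exists h; split; [right|]].
- by split; [move=> x; left | exists F; split; [right|]].
- move=> x; split; first by move=> Sx; split; left.
  by move=> [[//|->] [//|E]]; exfalso; apply: hF.
Qed.

Lemma irr_of (S : nat -> Prop) F : numerical_semigroup S -> frobenius S F ->
  (forall h, ~ S h -> (forall s, S s -> 0 < s -> S (h + s)) -> S (h + h) -> h = F) ->
  irreducible S.
Proof.
move=> ns [nF HF] Hsp; split => //; case: ns => [S0 _].
have key : forall T : nat -> Prop, (forall x y, T x -> T y -> T (x + y)) ->
    proper_subset S T -> T F.
  move=> T Tadd [sub [x0 [Tx0 nx0]]].
  have [h [[Th nh] hmax]] : exists h, (T h /\ ~ S h) /\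
      forall y, T y /\ ~ S y -> y <= h.
    apply: (@exmax _ F); first by exists x0.
    move=> x [_ nx]; case: (leqP x F) => // /HF //.
  have h0 : 0 < h by case: (posnP h) => [E|//]; rewrite E in nh.
  suff -> : F = h by [].
  symmetry; apply: Hsp => //.
    move=> s Ss sp; apply: NNPP => nhs.
    have := hmax (h + s) (conj (Tadd _ _ Th (sub _ Ss)) nhs); lia.
  apply: NNPP => nhs.
  have := hmax (h + h) (conj (Tadd _ _ Th Th) nhs); lia.
move=> [S1 [S2 [n1 n2 p1 p2 I]]].
apply: nF; apply/I; split.
  by apply: key => //; case: n1 => _ [].
by apply: key => //; case: n2 => _ [].
Qed.
Lemma mod_eq n k m r : r < m -> n = k * m + r -> n %% m = r.
Proof. by move=> rm ->; rewrite modnMDl modn_small. Qed.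

Section Conc.
Variables (m a b t : nat).
Hypotheses (m3 : 3 <= m) (a1 : 1 <= a) (t2 : 2 <= t) (tm : t < m)
  (hb1 : (t.-1) * a <= b) (hb2 : b < t * a).

Definition c i := (i %% t) * a + (i %/ t) * b.
Definition w i := i + m * c i.
Definition memS n := w (n %% m) <= n.

Lemma t0 : 0 < t. Proof. lia. Qed.
Lemma m0 : 0 < m. Proof. lia. Qed.

Lemma c_qr q r : r < t -> c (q * t + r) = r * a + q * b.
Proof. move=> rt; rewrite /c modnMDl divnMDl ?t0 // modn_small // divn_small //. by rewrite addn0. Qed.

Lemma dec i : exists q r, r < t /\ i = q * t + r.
Proof. exists (i %/ t), (i %% t); split; [exact: ltn_pmod t0 | exact: divn_eq]. Qed.

Lemma c0 : c 0 = 0.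
Proof. by rewrite /c mod0n div0n. Qed.

Lemma c_step i : c i <= c i.+1 <= c i + a.
Proof.
have [q [r [rt ->]]] := dec i.
rewrite c_qr //; case: (ltnP r.+1 t) => h.
  rewrite -addnS c_qr //; lia.
have E : t = r.+1 by lia.
have -> : (q * t + r).+1 = q.+1 * t + 0 by rewrite E; lia.
rewrite c_qr // ; move: hb1 hb2; rewrite E /=; nia.
Qed.

Lemma c_nd i : (i.+1) %% t != 0 -> c i.+1 = c i + a.
Proof.
have [q [r [rt ->]]] := dec i.
rewrite c_qr //; case: (ltnP r.+1 t) => h.
  by rewrite -addnS c_qr //; lia.
have E : t = r.+1 by lia.
have -> : (q * t + r).+1 = q.+1 * t + 0 by rewrite E; lia.
by rewrite modnMDl mod0n.
Qed.

Lemma c_t i : c (i + t) = c i + b.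
Proof.
have [q [r [rt ->]]] := dec i.
have -> : q * t + r + t = q.+1 * t + r by lia.
rewrite !c_qr //; lia.
Qed.

Lemma c_mono i j : i <= j -> c i <= c j.
Proof.
move=> /subnK <-; elim: (j - i) => [|k ih]; first by rewrite add0n.
rewrite addSn; have := c_step (k + i); lia.
Qed.

Lemma w_mono i j : i <= j -> w i <= w j.
Proof. move=> h; have := c_mono h; rewrite /w; nia. Qed.

Definition A := [:: m; a * m + 1; b * m + t].

Lemma memS_gen n : gen A n -> memS n.
Proof.
elim=> [|x g _ ih]; first by rewrite /memS mod0n /w c0 muln0.
move: ih; rewrite /memS.
have [i [q [im E]]] : exists i q, i < m /\ x = q * m + i.
  exists (x %% m), (x %/ m); split; [exact: ltn_pmod m0 | exact: divn_eq].
have xi : x %% m = i by exact: mod_eq im E.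
rewrite xi !inE => wi /or3P [/eqP->|/eqP->|/eqP->].
- by rewrite (@mod_eq _ q.+1 _ i); lia.
- case: (ltnP i.+1 m) => hh.
    rewrite (@mod_eq _ (q + a) _ i.+1); [|lia|lia].
    have := c_step i; rewrite /w in wi *; nia.
  rewrite (@mod_eq _ (q + a).+1 _ 0); [|lia|lia].
  by rewrite /w c0 muln0.
- case: (ltnP (i + t) m) => hh.
    rewrite (@mod_eq _ (q + b) _ (i + t)); [|lia|lia].
    rewrite /w c_t; rewrite /w in wi; nia.
  rewrite (@mod_eq _ (q + b).+1 _ (i + t - m)); [|lia|lia].
  have := @c_mono (i + t - m) i ltac:(lia); rewrite /w in wi *; nia.
Qed.

Lemma gen_memS n : memS n -> gen A n.
Proof.
rewrite /memS => h.
have [i [q [im E]]] : exists i q, i < m /\ n = q * m + i.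
  exists (n %% m), (n %/ m); split; [exact: ltn_pmod m0 | exact: divn_eq].
have xi : n %% m = i by exact: mod_eq im E.
rewrite xi in h.
have [y [x [xt Ei]]] := dec i.
have ci : c i = x * a + y * b by rewrite Ei c_qr.
have ci2 : c i <= q by rewrite /w in h; nia.
have -> : n = (q - c i) * m + (x * (a * m + 1) + y * (b * m + t)).
  rewrite E ci Ei; rewrite ci in ci2; nia.
apply: gen_add; first by apply: gen_mul; rewrite !inE eqxx.
by apply: gen_add; apply: gen_mul; rewrite !inE eqxx ?orbT.
Qed.

Lemma memP n : gen A n <-> memS n.
Proof. by split; [exact: memS_gen | exact: gen_memS]. Qed.


Definition F := w (m - 1) - m.

Lemma wm1 : m <= w (m - 1).
Proof.
have := @c_mono (0 + t) (m - 1) ltac:(lia); rewrite c_t c0 /w.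
have : a <= t.-1 * a by rewrite leq_pmull //; lia.
nia.
Qed.

Lemma memS_add x y : memS x -> memS y -> memS (x + y).
Proof. by move=> /memP hx /memP hy; apply/memP; apply: gen_add. Qed.

Lemma memS0 : memS 0.
Proof. by rewrite /memS mod0n /w c0 muln0. Qed.

Lemma memS_g g : g \in A -> memS g.
Proof. by move=> h; apply/memP; apply: gen_g. Qed.

Lemma memS_big n : F < n -> memS n.
Proof.
rewrite /memS /F => h.
have [i [q [im E]]] : exists i q, i < m /\ n = q * m + i.
  exists (n %% m), (n %/ m); split; [exact: ltn_pmod m0 | exact: divn_eq].
have xi : n %% m = i by exact: mod_eq im E.
rewrite xi; have := @w_mono i (m - 1) ltac:(lia); have := wm1.
rewrite /w in h * => h1 h2.
have : m * c i < m * q.+1 by nia.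
rewrite ltn_pmul2l ?m0 // ltnS => h3.
have : m * c i <= m * q by rewrite leq_pmul2l ?m0.
nia.
Qed.

Lemma F_gap : ~~ memS F.
Proof.
rewrite /memS /F; have := wm1.
have -> : (w (m - 1) - m) %% m = m - 1.
  apply: (@mod_eq _ (c (m - 1)).-1); first lia.
  have := wm1; rewrite /w; case: (c (m - 1)) => [|k]; first lia.
  rewrite /= mulnS; lia.
lia.
Qed.

Lemma frobF : frobenius (gen A) F.
Proof.
split; first by move/memP; apply/negP; exact: F_gap.
by move=> n /memS_big /memP.
Qed.

Lemma numS : numerical_semigroup (gen A).
Proof.
split; first exact: gen0.
split; first by move=> x y; apply: gen_add.
by exists F.+1 => n h; apply/memP; apply: memS_big.
Qed.

Definition PF f := [/\ ~~ memS f, memS (f + m), memS (f + (a * m + 1)) & memS (f + (b * m + t))].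

Lemma pf_exists x : ~~ memS x -> exists f, [/\ PF f, x <= f & memS (f - x)].
Proof.
move: {2}(F - x).+1 (ltnSn (F - x)) => k; elim: k x => [//|k ih] x hk hx.
have xF : x <= F by case: (leqP x F) => // /memS_big; rewrite (negbTE hx).
have step : forall g, g \in A -> 0 < g -> ~~ memS (x + g) ->
    exists f, [/\ PF f, x <= f & memS (f - x)].
  move=> g gA g0 hg.
  have xgF : x + g <= F by case: (leqP (x + g) F) => // /memS_big; rewrite (negbTE hg).
  have [f [pf h1 h2]] := ih (x + g) ltac:(lia) hg.
  exists f; split => //; first lia.
  have -> : f - x = (f - (x + g)) + g by lia.
  by apply: memS_add => //; apply: memS_g.
case E1: (memS (x + m)); last by apply: (step m); rewrite ?inE ?eqxx ?E1 //; lia.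
case E2: (memS (x + (a * m + 1))); last by apply: (step (a * m + 1)); rewrite ?inE ?eqxx ?E2 ?orbT //; lia.
case E3: (memS (x + (b * m + t))); last by apply: (step (b * m + t)); rewrite ?inE ?eqxx ?E3 ?orbT //; lia.
exists x; split => //; by rewrite subnn memS0.
Qed.

Lemma pf_sum f : PF f -> forall s, memS s -> 0 < s -> memS (f + s).
Proof.
move=> [_ h1 h2 h3] s /memP; elim=> [//|x g gx ih gA] _.
have hg : memS (f + g) by move: gA; rewrite !inE => /or3P [/eqP->|/eqP->|/eqP->].
case: (posnP x) => [->|xp]; first by rewrite add0n.
by rewrite addnA; apply: memS_add => //; [apply: ih | apply: memS_g].
Qed.

Lemma pf_char f : PF f -> f + m = w (f %% m) /\
  (f %% m = m - 1 \/ ((f %% m).+1 %% t = 0 /\ m <= f %% m + t)).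
Proof.
move=> [h0 h1 h2 h3].
have [i [q [im E]]] : exists i q, i < m /\ f = q * m + i.
  exists (f %% m), (f %/ m); split; [exact: ltn_pmod m0 | exact: divn_eq].
have xi : f %% m = i by exact: mod_eq im E.
move: h0 h1 h2 h3; rewrite /memS xi.
rewrite (@mod_eq (f + m) q.+1 m i) //; last by lia.
rewrite -ltnNge => h0 h1 h2 h3.
have e1 : c i = q.+1.
  have : m * q < m * c i by rewrite /w in h0; nia.
  rewrite ltn_pmul2l ?m0 // => l1.
  have : m * c i <= m * q.+1 by rewrite /w in h1; nia.
  rewrite leq_pmul2l ?m0 // => l2; lia.
have fw : f + m = w i by rewrite /w e1 E; lia.
split => //.
case: (ltnP i.+1 m) => hi; last by left; lia.
right.
move: h2; rewrite (@mod_eq (f + (a * m + 1)) (q + a) m i.+1) //; last by lia.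
move=> h2; split.
  apply/eqP; apply: contraLR h2 => /c_nd Ec.
  rewrite -ltnNge /w Ec; rewrite /w in fw; nia.
case: (ltnP (i + t) m) => hit //.
move: h3; rewrite (@mod_eq (f + (b * m + t)) (q + b) m (i + t)) //; last by lia.
rewrite /w c_t; nia.
Qed.

Lemma pf_F f : PF f -> f %% m = m - 1 -> f = F.
Proof. by move=> /pf_char [e _] E; rewrite /F -E -e addnK. Qed.

Lemma i_uniq i j : i.+1 %% t = 0 -> j.+1 %% t = 0 -> m <= i + t -> m <= j + t ->
  i < m.-1 -> j < m.-1 -> i = j.
Proof.
move=> hi hj h1 h2 h3 h4.
have ei := divn_eq i.+1 t; have ej := divn_eq j.+1 t.
rewrite hi addn0 in ei; rewrite hj addn0 in ej.
move: (i.+1 %/ t) (j.+1 %/ t) ei ej => ki kj ei ej.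
case: (ltngtP ki kj) => h.
- have : ki.+1 * t <= kj * t by rewrite leq_mul2r h orbT.
  rewrite mulSn; lia.
- have : kj.+1 * t <= ki * t by rewrite leq_mul2r h orbT.
  rewrite mulSn; lia.
- subst; lia.
Qed.


Lemma w_eq i : w i = i + m * c i. Proof. by []. Qed.

Lemma aux1 X Y f m' : f + m' = Y -> f + f = X - m' -> m' <= X -> X + m' = 2 * Y.
Proof. lia. Qed.

Lemma cm_eq : 2 * t = m + 1 -> c (m - 1) = (t - 2) * a + b.
Proof.
move=> Et; have -> : m - 1 = 1 * t + (t - 2) by lia.
by rewrite c_qr; lia.
Qed.

Lemma ct_eq : c (t - 1) = (t - 1) * a.
Proof.
have -> : t - 1 = 0 * t + (t - 1) by lia.
by rewrite c_qr; lia.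
Qed.

Lemma tail_arith i1 : i1 < m.-1 -> (i1.+1) %% t = 0 -> m <= i1 + t ->
  w (m - 1) + m = 2 * w i1 -> 2 * t = m + 1 /\ a * t = b + 1.
Proof.
move=> i1lt i1c1 i1c2 W0.
have [s Es] : exists s, t = s.+2 by exists (t - 2); lia.
have W : m - 1 + m * c (m - 1) + m = 2 * i1 + m * (2 * c i1).
  by rewrite -w_eq W0 w_eq mulnDr mulnCA.
have N1 : (m - 1 + m * c (m - 1) + m) %% m = m - 1.
  by apply: (@mod_eq _ (c (m - 1)).+1); lia.
have i1e : 2 * i1 = m - 1.
  case: (ltnP (2 * i1) m) => h.
    by move: N1; rewrite W (@mod_eq _ (2 * c i1) m (2 * i1)) //; lia.
  by move: N1; rewrite W (@mod_eq _ (2 * c i1).+1 m (2 * i1 - m)); lia.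
have ti : i1.+1 = t.
  have ei := divn_eq i1.+1 t; rewrite i1c1 addn0 in ei.
  move: (i1.+1 %/ t) ei => k ei.
  case: k ei => [|[|k]] ei; [by rewrite mul0n in ei | lia | rewrite !mulSn in ei; lia].
have Et : 2 * t = m + 1 by lia.
split => //.
have cm := cm_eq Et.
have ci : c i1 = (t - 1) * a by rewrite (_ : i1 = t - 1) ?ct_eq //; lia.
have : m * (c (m - 1)).+1 = m * (2 * c i1) by rewrite mulnS; lia.
move/eqP; rewrite eqn_pmul2l ?m0 // cm ci Es => /eqP.
have -> : s.+2 - 2 = s by lia.
have -> : s.+2 - 1 = s.+1 by lia.
lia.
Qed.

Lemma back_i i : i < m -> i <> m - 1 -> i.+1 %% t = 0 -> 2 * t = m + 1 -> i = t - 1.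
Proof.
move=> im E h1 Et.
have ei := divn_eq i.+1 t; rewrite h1 addn0 in ei.
move: (i.+1 %/ t) ei => k ei.
case: k ei => [|[|k]] ei; [by rewrite mul0n in ei | lia | rewrite !mulSn in ei; lia].
Qed.

Lemma back_facts : 2 * t = m + 1 -> a * t = b + 1 ->
  F = (t - 1 + m * ((t - 1) * a) - m).*2 /\ forall h, h + m = w (t - 1) -> h + h = F.
Proof.
move=> Et Eb.
have [s Es] : exists s, t = s.+2 by exists (t - 2); lia.
have cm := cm_eq Et; have ct := ct_eq.
have Y1 : 1 <= (t - 1) * a by rewrite Es; nia.
have cY : (c (m - 1)).+1 = 2 * ((t - 1) * a).
  rewrite cm Es; have -> : s.+2 - 2 = s by lia.
  have -> : s.+2 - 1 = s.+1 by lia.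
  rewrite Es in Eb; lia.
have mY : m * c (m - 1) + m = 2 * (m * ((t - 1) * a)).
  by rewrite addnC -mulnS cY mulnCA.
have wm := wm1.
have mm : m <= m * ((t - 1) * a) by rewrite leq_pmulr.
have m1 : m - 1 = 2 * (t - 1) by lia.
rewrite /F w_eq; split.
  move: mY wm mm; rewrite w_eq m1; move: (m * c (m - 1)) (m * ((t - 1) * a)) => X Y.
  rewrite -addnn; lia.
move=> h; rewrite w_eq ct.
move: mY wm mm; rewrite w_eq m1; move: (m * c (m - 1)) (m * ((t - 1) * a)) => X Y.
lia.
Qed.


Lemma main_sec : pseudo_symmetric (gen A) <-> (2 * t = m + 1 /\ a * t = b + 1).
Proof.
split.
- move=> [Hirr [f [Hf ev]]].
  have fF : f = F.
    case: Hf => nf Hf; case: frobF => nF HF.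
    have l1 : ~ f < F by move=> /Hf /nF.
    have l2 : ~ F < f by move=> /HF /nf.
    lia.
  subst f.
  have eF := even_halfK ev; move: eF; set y := F./2 => eF.
  rewrite -addnn in eF.
  have gy : ~~ memS y.
    apply/negP => my; have := memS_add my my; rewrite eF; apply/negP; exact: F_gap.
  have [f1 [pf1 yf1 my1]] := pf_exists gy.
  have [e1 c1] := pf_char pf1.
  have f1F : f1 <> F.
    by move=> E; move: my1; rewrite E -eF addnK; apply/negP.
  have i1m : f1 %% m < m by exact: ltn_pmod m0.
  have i1n : f1 %% m <> m - 1 by move=> E; apply: f1F; apply: pf_F.
  have [i1c1 i1c2] : (f1 %% m).+1 %% t = 0 /\ m <= f1 %% m + t.
    by case: c1 => // E; case: i1n.
  have i1lt : f1 %% m < m.-1.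
    move: i1m i1n; move: (f1 %% m) => i; lia.
  have n2 : ~~ memS (f1 + f1).
    apply/negP => h2; apply: (not_irr numS frobF _ f1F _ _) Hirr.
    + by move/memP; apply/negP; case: pf1.
    + by move=> s0 /memP hs sp; apply/memP; exact: pf_sum pf1 _ hs sp.
    + by apply/memP.
  have [f2 [pf2 f2ge _]] := pf_exists n2.
  have [e2 c2] := pf_char pf2.
  have f1F2 : f1 + f1 <= F.
    case: (eqVneq (f2 %% m) (m - 1)) => E2; first by rewrite -(pf_F pf2 E2).
    case: c2 => [E3|[h1 h2]]; first by rewrite E3 eqxx in E2.
    have i2m : f2 %% m < m by exact: ltn_pmod m0.
    have i2lt : f2 %% m < m.-1.
      move: i2m E2; move: (f2 %% m) => i /eqP; lia.
    have := i_uniq h1 i1c1 h2 i1c2 i2lt i1lt => E.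
    rewrite E -e1 in e2.
    have f12 : f2 = f1 by move: e2; clear; lia.
    have f10 : f1 = 0 by move: f12 f2ge; clear; lia.
    by case: pf1; rewrite f10 memS0.
  have FF : f1 + f1 = w (m - 1) - m by rewrite -/F; move: f1F2 yf1 eF; clear; lia.
  exact: (tail_arith i1lt i1c1 i1c2 (aux1 e1 FF wm1)).
- move=> [Et Eb].
  have [FE hh] := back_facts Et Eb.
  split; last by exists F; split; [exact: frobF | rewrite FE odd_double].
  apply: (irr_of numS frobF) => h nh hs h2.
  have gm : forall g, g \in A -> 0 < g -> memS (h + g).
    by move=> g gA g0; apply/memP; apply: hs => //; apply: gen_g.
  have pf : PF h.
    split.
    + by apply/negP => /memP.
    + by apply: gm; rewrite ?inE ?eqxx //; lia.
    + by apply: gm; rewrite ?inE ?eqxx ?orbT //; lia.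
    + by apply: gm; rewrite ?inE ?eqxx ?orbT //; lia.
  have [e c'] := pf_char pf.
  case: (eqVneq (h %% m) (m - 1)) => E; first exact: pf_F pf E.
  exfalso.
  case: c' => [E'|[h1 _]]; first by rewrite E' eqxx in E.
  have im : h %% m < m by exact: ltn_pmod m0.
  have := back_i im (fun x => elimN eqP E x) h1 Et => ei.
  rewrite ei in e.
  by move/memP: h2; rewrite (hh _ e) => mF; move: F_gap; rewrite mF.
Qed.

End Conc.

Theorem proposition3p25 (m a b t : nat) :
  3 <= m -> 1 <= a -> 2 <= t <= m - 1 ->
  (t - 1) * (a * m + 1) < b * m + t < t * (a * m + 1) ->
  pseudo_symmetric (gen [:: m; a * m + 1; b * m + t]) <->
  (2 * t = m + 1 /\ a * t = b + 1).
Proof.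
move=> m3 a1 /andP [t2 tm] /andP [h1 h2].
have m0 : 0 < m by lia.
have hb2 : b < t * a.
  have : b * m < (t * a) * m by nia.
  by rewrite ltn_pmul2r.
have hb1 : t.-1 * a <= b.
  case: (leqP (t.-1 * a) b) => // h.
  have : b.+1 * m <= t.-1 * a * m by rewrite leq_mul2r h orbT.
  have [s Es] : exists s, t = s.+1 by exists t.-1; lia.
  rewrite Es /= in h1 *; rewrite subn1 /= in h1; nia.
by apply: (@main_sec m a b t) => //; lia.
Qed.
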